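(* Let $\Omega\subset\mathbb{R}^2$ have property (i). Then: 1. $\Omega$ has property $( * )$ if and only if $\Omega^\diamond$ has property $( ** )$. 2. $\Omega^\diamond$ has property $( * )$ if and only if $\Omega$ has property $( ** )$.
   Context: Points of $\mathbb{R}^2$ are written $(x,y)$, points of the dual $\mathbb{R}^{2*}$ as $(p,q)$. The antipolar of $\Omega\subset\mathbb{R}^2$ is $\Omega^\diamond=\{(p,q)\in\mathbb{R}^{2*}: px-qy\ge1\ \forall(x,y)\in\Omega\}$. For a set $\Sigma$ (in $\mathbb{R}^2$ or in $\mathbb{R}^{2*}$): property (i): $\Sigma$ is nonempty, convex, closed, $0\notin\Sigma$, and $\lambda\Sigma\subset\Sigma$ for all $\lambda>1$. Property $( * )$: $\lambda\Sigma\cap\partial\Sigma=\varnothing$ for all $\lambda>1$ (no ray issued from the origin lies on $\partial\Sigma$). Property $( ** )$: letting $C=\operatorname{cl}(\mathbb{R}_+\Sigma)$ with $\mathbb{R}_+=[0,\infty)$, and $\partial C=l_0\cup l_1$ with $l_0,l_1$ the two (possibly coinciding) boundary rays of the closed cone $C$, one has $\operatorname{dist}(l_0,\Sigma)=\operatorname{dist}(l_1,\Sigma)=0$. *)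

(* Defs.v *)
(* concrete reals R; R^2 and its dual both modelled as R * R. *)
From Stdlib Require Import Reals.
Open Scope R_scope.

Definition pt := (R * R)%type.
Definition pset := pt -> Prop.

Definition edist (a b : pt) : R :=
  sqrt ((fst a - fst b)^2 + (snd a - snd b)^2).

Definition scal (l : R) (a : pt) : pt := (l * fst a, l * snd a).

Definition closure (S : pset) : pset :=
  fun a => forall eps, 0 < eps -> exists b, S b /\ edist a b < eps.
Definition interior (S : pset) : pset :=
  fun a => exists eps, 0 < eps /\ forall b, edist a b < eps -> S b.
Definition boundary (S : pset) : pset :=
  fun a => closure S a /\ ~ interior S a.
Definition is_closed (S : pset) : Prop := forall a, closure S a -> S a.

Definition is_convex (S : pset) : Prop :=
  forall a b t, S a -> S b -> 0 <= t <= 1 ->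
    S (t * fst a + (1 - t) * fst b, t * snd a + (1 - t) * snd b).

Definition scale_set (l : R) (S : pset) : pset :=
  fun a => exists s, S s /\ a = scal l s.

Definition cone_hull (S : pset) : pset :=
  fun a => exists l s, 0 <= l /\ S s /\ a = scal l s.

Definition ray (d : pt) : pset := fun a => exists t, 0 <= t /\ a = scal t d.

(* dist(A, B) = inf { |a - b| : a in A, b in B } = 0, unfolded *)
Definition dist_zero (A B : pset) : Prop :=
  forall eps, 0 < eps -> exists a b, A a /\ B b /\ edist a b < eps.

Definition antipolar (Om : pset) : pset :=
  fun pq => forall xy, Om xy -> fst pq * fst xy - snd pq * snd xy >= 1.

Definition prop_i (S : pset) : Prop :=
  (exists a, S a) /\ is_convex S /\ is_closed S /\ ~ S (0, 0) /\
  (forall l, l > 1 -> forall a, scale_set l S a -> S a).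

Definition prop_star (S : pset) : Prop :=
  forall l, l > 1 -> forall a, ~ (scale_set l S a /\ boundary S a).

Definition prop_starstar (S : pset) : Prop :=
  exists d0 d1 : pt, d0 <> (0, 0) /\ d1 <> (0, 0) /\
    (forall a, boundary (closure (cone_hull S)) a <-> (ray d0 a \/ ray d1 a)) /\
    dist_zero (ray d0) S /\ dist_zero (ray d1) S.

(* Main.v *)
Require Import Defs.
From Stdlib Require Import Reals Lra Psatz Classical FunctionalExtensionality PropExtensionality IndefiniteDescription.
From Stdlib Require Rtopology.
Import Defs.
Open Scope R_scope.

Definition P (a b : pt) : R := fst a * fst b - snd a * snd b.
Definition d2 (a b : pt) : R := (fst a - fst b)^2 + (snd a - snd b)^2.
Definition n2 (a : pt) : R := fst a ^2 + snd a ^2.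

Lemma d2_ge0 (a b : pt) : 0 <= d2 a b.
Proof. unfold d2. pose proof (pow2_ge_0 (fst a - fst b)). pose proof (pow2_ge_0 (snd a - snd b)). lra. Qed.

Lemma d2_sym (a b : pt) : d2 a b = d2 b a.
Proof. unfold d2; ring. Qed.

Lemma P_sym (a b : pt) : P a b = P b a.
Proof. unfold P; ring. Qed.

Lemma edist_lt (a b : pt) e : 0 < e -> (edist a b < e <-> d2 a b < e^2).
Proof.
  intros He. change (sqrt (d2 a b) < e <-> d2 a b < e^2).
  pose proof (d2_ge0 a b). split; intros H1.
  - pose proof (sqrt_pos (d2 a b)). rewrite <- (pow2_sqrt (d2 a b)) by lra. nra.
  - rewrite <- (sqrt_pow2 e) by lra. apply sqrt_lt_1_alt. lra.
Qed.

Lemma closure_iff (S : pset) (a : pt) : closure S a <-> forall e, 0 < e -> exists b, S b /\ d2 a b < e.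
Proof.
  split; intros H e He.
  - destruct (H (sqrt e) (sqrt_lt_R0 _ He)) as [b [Hb Hd]].
    exists b; split; auto. apply edist_lt in Hd; [|apply sqrt_lt_R0; auto].
    rewrite pow2_sqrt in Hd; lra.
  - destruct (H (e^2)) as [b [Hb Hd]]; [nra|]. exists b; split; auto.
    apply edist_lt; auto.
Qed.

Lemma interior_iff (S : pset) (a : pt) : interior S a <-> exists e, 0 < e /\ forall b, d2 a b < e -> S b.
Proof.
  split; intros [e [He H]].
  - exists (e^2); split; [nra|]. intros b Hb. apply H. apply edist_lt; auto.
  - exists (sqrt e); split; [apply sqrt_lt_R0; auto|]. intros b Hb.
    apply H. apply edist_lt in Hb; [|apply sqrt_lt_R0; auto]. rewrite pow2_sqrt in Hb; lra.
Qed.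

Lemma boundary_iff (S : pset) (a : pt) : boundary S a <-> closure S a /\ ~ interior S a.
Proof. reflexivity. Qed.

Lemma closed_in (S : pset) (a : pt) : is_closed S -> closure S a -> S a.
Proof. auto. Qed.

Lemma in_closure (S : pset) (a : pt) : S a -> closure S a.
Proof. intros H. apply closure_iff. intros e He. exists a. split; auto. replace (d2 a a) with 0 by (unfold d2; ring); lra. Qed.

Lemma CS (a b : pt) : (P a b)^2 <= n2 a * n2 b.
Proof. unfold P, n2. pose proof (pow2_ge_0 (fst a * snd b + snd a * fst b)). nra. Qed.

Lemma pair_eq (a : pt) : a = (fst a, snd a).
Proof. destruct a; reflexivity. Qed.

Lemma sq_le_abs x y : x^2 <= y^2 -> 0 <= y -> -y <= x.
Proof. intros. destruct (Rle_or_lt (-y) x); auto. assert (0 < -y - x) by lra. nra. Qed.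

Lemma archi e : 0 < e -> exists N : nat, forall n, (N <= n)%nat -> / (INR n + 1) < e.
Proof.
  intros He. destruct (archimed_cor1 e He) as [N [HN HN0]]. exists N. intros n Hn.
  assert (INR N <= INR n) by (apply le_INR; auto).
  assert (0 < INR N) by (apply lt_0_INR; auto).
  apply Rle_lt_trans with (/ INR N); auto. apply Rinv_le_contravar; lra.
Qed.

Lemma choice_nat (Q : nat -> pt -> Prop) : (forall n, exists z, Q n z) -> exists f : nat -> pt, forall n, Q n (f n).
Proof.
  intros H. exists (fun n => proj1_sig (constructive_indefinite_description _ (H n))).
  intros n. exact (proj2_sig (constructive_indefinite_description _ (H n))).
Qed.

Lemma sq_lt_abs x e : x^2 < e^2 -> 0 < e -> Rabs x < e.
Proof. intros. unfold Rabs; destruct (Rcase_abs x); nra. Qed.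

Lemma abs_lt_sq x e : Rabs x < e -> x^2 < e^2.
Proof. unfold Rabs; destruct (Rcase_abs x); intros; nra. Qed.

Lemma le_eps a b : (forall eta, 0 < eta -> a <= b + eta) -> a <= b.
Proof. intros H. destruct (Rle_or_lt a b); auto. specialize (H ((a-b)/2)). lra. Qed.

Lemma cvg2 (u v : nat -> R) p1 p2 : Un_cv u p1 -> Un_cv v p2 ->
  forall r, 0 < r -> exists N, forall n, (N <= n)%nat -> d2 (p1, p2) (u n, v n) < r.
Proof.
  intros Hu Hv r Hr.
  assert (Hs : 0 < sqrt (r/2)) by (apply sqrt_lt_R0; lra).
  destruct (Hu _ Hs) as [N1 H1]. destruct (Hv _ Hs) as [N2 H2].
  exists (max N1 N2). intros n Hn.
  assert (A1 := H1 n ltac:(lia)). assert (A2 := H2 n ltac:(lia)).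
  unfold Rdist in *. apply abs_lt_sq in A1. apply abs_lt_sq in A2.
  rewrite pow2_sqrt in A1, A2 by lra. unfold d2; simpl. nra.
Qed.

Lemma nearest (S : pset) (x : pt) :
  is_closed S -> is_convex S -> (exists s, S s) ->
  exists p, S p /\ forall z, S z ->
    (fst x - fst p) * (fst z - fst p) + (snd x - snd p) * (snd z - snd p) <= 0.
Proof.
  intros Hcl Hcv [s Hs].
  set (E := fun r => exists z, S z /\ r = - d2 z x).
  assert (HE1 : bound E). { exists 0. intros r [z [_ ->]]. pose proof (d2_ge0 z x). lra. }
  assert (HE2 : exists r, E r) by (exists (- d2 s x); exists s; auto).
  destruct (completeness E HE1 HE2) as [m [Hm1 Hm2]].
  set (D := - m).
  assert (HD1 : forall z, S z -> D <= d2 z x).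
  { intros z Hz. assert (- d2 z x <= m) by (apply Hm1; exists z; auto). unfold D; lra. }
  assert (HD2 : forall eta, 0 < eta -> exists z, S z /\ d2 z x < D + eta).
  { intros eta He. apply NNPP. intros Hn.
    assert (m <= - D - eta).
    { apply Hm2. intros r [z [Hz ->]]. destruct (Rle_or_lt (d2 z x) (D + eta)) as [H|H].
      - destruct (Rle_lt_or_eq_dec _ _ H) as [H'|H'].
        + exfalso; apply Hn; exists z; auto.
        + lra.
      - lra. }
    unfold D in *; lra. }
  assert (HD0 : 0 <= D).
  { assert (m <= 0). { apply Hm2. intros r [z [_ ->]]. pose proof (d2_ge0 z x). lra. }
    unfold D; lra. }
  destruct (choice_nat (fun n z => S z /\ d2 z x < D + / (INR n + 1))) as [f Hf].
  { intros n. apply HD2. apply Rinv_0_lt_compat. pose proof (pos_INR n); lra. }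
  assert (Hc : forall n k, d2 (f n) (f k) <= 2 * / (INR n + 1) + 2 * / (INR k + 1)).
  { intros n k. destruct (Hf n) as [Sn Dn]. destruct (Hf k) as [Sk Dk].
    pose proof (Hcv _ _ (1/2) Sn Sk ltac:(lra)) as Hmid.
    pose proof (HD1 _ Hmid) as Hm.
    assert (Id : d2 (f n) (f k) = 2 * d2 (f n) x + 2 * d2 (f k) x
       - 4 * d2 (1 / 2 * fst (f n) + (1 - 1 / 2) * fst (f k), 1 / 2 * snd (f n) + (1 - 1 / 2) * snd (f k)) x).
    { unfold d2; simpl; field. }
    lra. }
  assert (Hcc : forall e, 0 < e -> exists N, forall n k, (N <= n)%nat -> (N <= k)%nat -> d2 (f n) (f k) < e).
  { intros e He. destruct (archi (e/4)) as [N HN]; [lra|]. exists N. intros n k Hn Hk.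
    specialize (HN n Hn) as A1. specialize (HN k Hk) as A2. specialize (Hc n k). lra. }
  assert (Cu : Cauchy_crit (fun n => fst (f n))).
  { intros e He. destruct (Hcc (e^2)) as [N HN]; [nra|]. exists N. intros n k Hn Hk.
    unfold Rdist. apply sq_lt_abs; [|lra]. specialize (HN n k Hn Hk). unfold d2 in HN.
    pose proof (pow2_ge_0 (snd (f n) - snd (f k))). lra. }
  assert (Cv : Cauchy_crit (fun n => snd (f n))).
  { intros e He. destruct (Hcc (e^2)) as [N HN]; [nra|]. exists N. intros n k Hn Hk.
    unfold Rdist. apply sq_lt_abs; [|lra]. specialize (HN n k Hn Hk). unfold d2 in HN.
    pose proof (pow2_ge_0 (fst (f n) - fst (f k))). lra. }
  destruct (R_complete _ Cu) as [p1 Hp1]. destruct (R_complete _ Cv) as [p2 Hp2].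
  pose proof (cvg2 _ _ _ _ Hp1 Hp2) as Hconv.
  assert (Hconv' : forall r, 0 < r -> exists N, forall n, (N <= n)%nat -> d2 (p1, p2) (f n) < r).
  { intros r Hr. destruct (Hconv r Hr) as [N HN]. exists N. intros n Hn.
    rewrite (pair_eq (f n)). apply HN; auto. }
  clear Hconv.
  set (p := (p1, p2)). fold p in Hconv'.
  assert (Sp : S p).
  { apply Hcl. apply closure_iff. intros e He. destruct (Hconv' e He) as [N HN].
    exists (f N). split; [apply Hf|apply HN; lia]. }
  assert (Hpx : d2 p x <= D).
  { apply le_eps. intros eta He.
    set (K := D + 1).
    set (r := Rmin (eta/3) ((eta/6)^2 / (K + 1))).
    assert (Hr : 0 < r).
    { unfold r. apply Rmin_pos; [lra|]. apply Rdiv_lt_0_compat; [nra|unfold K; lra]. }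
    destruct (Hconv' r Hr) as [N1 HN1]. destruct (archi (eta/3)) as [N2 HN2]; [lra|].
    set (n := max N1 N2).
    specialize (HN1 n ltac:(unfold n; lia)). specialize (HN2 n ltac:(unfold n; lia)).
    destruct (Hf n) as [_ Hfn].
    assert (HK : d2 (f n) x <= K).
    { unfold K. assert (/ (INR n + 1) <= 1).
      { rewrite <- Rinv_1. apply Rinv_le_contravar; [lra|]. pose proof (pos_INR n); lra. }
      lra. }
    assert (Hr1 : r <= eta/3) by apply Rmin_l.
    assert (Hr2 : r <= (eta/6)^2 / (K+1)) by apply Rmin_r.
    set (u1 := p1 - fst (f n)). set (u2 := p2 - snd (f n)).
    set (w1 := fst (f n) - fst x). set (w2 := snd (f n) - snd x).
    assert (Id : d2 p x = d2 (f n) x + 2 * (u1 * w1 + u2 * w2) + d2 p (f n)).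
    { unfold d2, u1, u2, w1, w2, p; simpl. ring. }
    assert (Hu : u1^2 + u2^2 < r) by (unfold u1, u2; exact HN1).
    assert (Hw : w1^2 + w2^2 <= K) by (unfold w1, w2; exact HK).
    assert (HK0 : 0 < K + 1) by (unfold K; lra).
    assert (Hdot2 : (u1 * w1 + u2 * w2)^2 <= (eta/6)^2).
    { assert ((u1 * w1 + u2 * w2)^2 <= (u1^2+u2^2) * (w1^2+w2^2)).
      { pose proof (pow2_ge_0 (u1 * w2 - u2 * w1)). nra. }
      assert ((u1^2+u2^2) * (w1^2+w2^2) <= r * (K+1)).
      { apply Rmult_le_compat; try nra. }
      assert (r * (K+1) <= (eta/6)^2).
      { apply Rmult_le_reg_r with (/ (K+1)). apply Rinv_0_lt_compat; lra.
        rewrite Rmult_assoc, Rinv_r by lra. unfold Rdiv in Hr2. lra. }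
      lra. }
    assert (Hdot : u1 * w1 + u2 * w2 <= eta/6).
    { pose proof (sq_le_abs (-(u1 * w1 + u2 * w2)) (eta/6)). nra. }
    lra. }
  exists p. split; auto.
  intros z Hz.
  set (w := (fst x - fst p) * (fst z - fst p) + (snd x - snd p) * (snd z - snd p)).
  destruct (Rle_or_lt w 0) as [Hw|Hw]; auto. exfalso.
  set (K2 := d2 z p).
  assert (HK2 : 0 <= K2) by apply d2_ge0.
  set (t := w / (K2 + w)).
  assert (Ht : t * (K2 + w) = w) by (unfold t; field; lra).
  assert (Ht0 : 0 < t) by (unfold t; apply Rdiv_lt_0_compat; lra).
  assert (Ht1 : t <= 1).
  { unfold t. apply Rmult_le_reg_r with (K2 + w); [lra|]. unfold Rdiv. rewrite Rmult_assoc, Rinv_l by lra. lra. }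
  pose proof (Hcv _ _ t Hz Sp ltac:(lra)) as Hq.
  pose proof (HD1 _ Hq) as Hq2.
  assert (Id : d2 (t * fst z + (1 - t) * fst p, t * snd z + (1 - t) * snd p) x = d2 p x - 2 * t * w + t^2 * K2).
  { unfold K2, w, d2; simpl. ring. }
  assert (t * K2 < w) by nra.
  nra.
Qed.

Lemma separation (S : pset) (x : pt) :
  is_closed S -> is_convex S -> (exists s, S s) -> ~ S x ->
  exists phi c, (forall z, S z -> P phi z >= c) /\ P phi x < c.
Proof.
  intros Hcl Hcv Hne Hx.
  destruct (nearest S x Hcl Hcv Hne) as [p [Sp Hp]].
  exists (fst p - fst x, - (snd p - snd x)).
  exists ((fst p - fst x) * fst p + (snd p - snd x) * snd p).
  split.
  - intros z Hz. specialize (Hp z Hz). unfold P; simpl. nra.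
  - unfold P; simpl.
    assert (0 < (fst p - fst x)^2 + (snd p - snd x)^2).
    { destruct (Rle_or_lt ((fst p - fst x)^2 + (snd p - snd x)^2) 0) as [H|H]; auto.
      exfalso. apply Hx.
      pose proof (pow2_ge_0 (fst p - fst x)). pose proof (pow2_ge_0 (snd p - snd x)).
      assert (fst p = fst x) by nra. assert (snd p = snd x) by nra.
      rewrite (pair_eq x). rewrite <- H2, <- H3. rewrite <- pair_eq. auto. }
    nra.
Qed.

Definition Kst (Om : pset) : pset := fun phi => forall z, Om z -> P phi z >= 0.

Lemma P_diff_bound (a b z : pt) : (P a z - P b z)^2 <= d2 a b * n2 z.
Proof.
  unfold P, d2, n2.
  pose proof (pow2_ge_0 ((fst a - fst b) * snd z + (snd a - snd b) * fst z)). nra.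
Qed.

Lemma halfplane_closed (S : pset) (z : pt) c phi :
  closure S phi -> (forall psi, S psi -> P psi z >= c) -> P phi z >= c.
Proof.
  intros Hcl H. destruct (Rle_or_lt c (P phi z)) as [h|h]; [lra|exfalso].
  set (eta := c - P phi z).
  assert (Hn : 0 <= n2 z) by (unfold n2; pose proof (pow2_ge_0 (fst z)); pose proof (pow2_ge_0 (snd z)); lra).
  apply closure_iff with (e := eta^2 / (n2 z + 1)) in Hcl.
  2: { apply Rdiv_lt_0_compat; [unfold eta; nra|lra]. }
  destruct Hcl as [psi [Hpsi Hd]].
  specialize (H psi Hpsi). pose proof (P_diff_bound psi phi z) as Hb.
  rewrite d2_sym in Hd.
  assert (eta^2 <= (P psi z - P phi z)^2).
  { unfold eta in *. assert (0 < c - P phi z) by lra. nra. }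
  assert (d2 psi phi * n2 z <= eta^2 / (n2 z + 1) * n2 z).
  { apply Rmult_le_compat_r; lra. }
  assert (eta^2 / (n2 z + 1) * n2 z < eta^2).
  { unfold Rdiv. assert (0 < eta^2) by (unfold eta; nra).
    assert (/ (n2 z + 1) * n2 z < 1).
    { apply Rmult_lt_reg_l with (n2 z + 1); [lra|]. rewrite <- Rmult_assoc, Rinv_r by lra. lra. }
    nra. }
  lra.
Qed.

Lemma prop_i_nz Om z : prop_i Om -> Om z -> z <> (0,0).
Proof. intros (_ & _ & _ & H0 & _) Hz E. subst. auto. Qed.

Lemma F1 Om : prop_i Om -> exists psi, antipolar Om psi.
Proof.
  intros (Hne & Hcv & Hcl & H0 & Hsc).
  destruct (separation Om (0,0) Hcl Hcv Hne H0) as [phi [c [H1 H2]]].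
  unfold P in H2; simpl in H2.
  exists (fst phi / c, snd phi / c). intros z Hz. specialize (H1 z Hz). unfold P in H1. simpl.
  replace (fst phi / c * fst z - snd phi / c * snd z) with ((fst phi * fst z - snd phi * snd z) / c) by (field; lra).
  apply Rle_ge. apply Rmult_le_reg_r with c; [lra|]. unfold Rdiv. rewrite Rmult_assoc, Rinv_l by lra. lra.
Qed.

Lemma scal_nonneg Om phi c : prop_i Om -> (forall z, Om z -> P phi z >= c) -> forall z, Om z -> P phi z >= 0.
Proof.
  intros (Hne & Hcv & Hcl & H0 & Hsc) H z Hz.
  destruct (Rle_or_lt 0 (P phi z)) as [h|h]; [lra|exfalso].
  set (l := 1 + (Rabs c + 1) / (- P phi z)).
  assert (Hl : l > 1). { unfold l. assert (0 < (Rabs c + 1) / (- P phi z)); [|lra].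
    apply Rdiv_lt_0_compat; [pose proof (Rabs_pos c)|]; lra. }
  assert (Om (scal l z)) by (apply (Hsc l Hl); exists z; auto).
  specialize (H _ H1). unfold P, scal in H; simpl in H.
  replace (fst phi * (l * fst z) - snd phi * (l * snd z)) with (l * P phi z) in H by (unfold P; ring).
  replace (l * P phi z) with (P phi z - (Rabs c + 1)) in H by (unfold l; field; lra).
  pose proof (Rle_abs (- c)). rewrite Rabs_Ropp in H2. lra.
Qed.

Lemma F3 Om x : prop_i Om -> antipolar (antipolar Om) x -> Om x.
Proof.
  intros Hi Hx. apply NNPP; intros Hn.
  pose proof Hi as (Hne & Hcv & Hcl & H0 & Hsc).
  destruct (separation Om x Hcl Hcv Hne Hn) as [phi [c [H1 H2]]].
  pose proof (scal_nonneg Om phi c Hi H1) as Hpos.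
  destruct (Rlt_or_le 0 c) as [hc|hc].
  - assert (Hd : antipolar Om (fst phi / c, snd phi / c)).
    { intros z Hz. specialize (H1 z Hz). unfold P in H1. simpl.
      replace (fst phi / c * fst z - snd phi / c * snd z) with ((fst phi * fst z - snd phi * snd z) / c) by (field; lra).
      apply Rle_ge. apply Rmult_le_reg_r with c; [lra|]. unfold Rdiv. rewrite Rmult_assoc, Rinv_l by lra. lra. }
    specialize (Hx _ Hd). simpl in Hx. unfold P in H2.
    replace (fst x * (fst phi / c) - snd x * (snd phi / c)) with ((fst phi * fst x - snd phi * snd x) / c) in Hx by (field; lra).
    assert ((fst phi * fst x - snd phi * snd x) / c < 1).
    { apply Rmult_lt_reg_r with c; [lra|]. unfold Rdiv. rewrite Rmult_assoc, Rinv_l by lra. lra. }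
    lra.
  - destruct (F1 Om Hi) as [psi0 Hpsi0].
    set (M := (Rabs (P psi0 x) + 1) / (- P phi x)).
    assert (HM : 0 < M) by (unfold M; apply Rdiv_lt_0_compat; [pose proof (Rabs_pos (P psi0 x))|]; lra).
    assert (Hd : antipolar Om (fst psi0 + M * fst phi, snd psi0 + M * snd phi)).
    { intros z Hz. specialize (Hpsi0 z Hz). specialize (Hpos z Hz). unfold P in Hpos. simpl. nra. }
    specialize (Hx _ Hd). simpl in Hx.
    replace (fst x * (fst psi0 + M * fst phi) - snd x * (snd psi0 + M * snd phi)) with (P psi0 x + M * P phi x) in Hx by (unfold P; ring).
    replace (M * P phi x) with (- (Rabs (P psi0 x) + 1)) in Hx by (unfold M; field; lra).
    pose proof (Rle_abs (P psi0 x)). lra.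
Qed.

Lemma prop_i_dual Om : prop_i Om -> prop_i (antipolar Om).
Proof.
  intros Hi. pose proof Hi as (Hne & Hcv & Hcl & H0 & Hsc).
  split; [apply F1; auto|]. split; [|split; [|split]].
  - intros a b t Ha Hb Ht z Hz. specialize (Ha z Hz). specialize (Hb z Hz). simpl. nra.
  - intros phi Hphi z Hz. apply (halfplane_closed _ z 1 phi Hphi). intros psi Hpsi. apply Hpsi; auto.
  - intros H. destruct Hne as [z Hz]. specialize (H z Hz). simpl in H. lra.
  - intros l Hl a [s [Hs ->]] z Hz. specialize (Hs z Hz). unfold scal; simpl. nra.
Qed.

Lemma bipolar Om : prop_i Om -> antipolar (antipolar Om) = Om.
Proof.
  intros Hi. apply functional_extensionality. intros x. apply propositional_extensionality.
  split; [apply F3; auto|]. intros Hx psi Hpsi. specialize (Hpsi x Hx). lra.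
Qed.

Lemma F4 Om : prop_i Om -> closure (cone_hull (antipolar Om)) = Kst Om.
Proof.
  intros Hi. apply functional_extensionality. intros phi. apply propositional_extensionality.
  split.
  - intros Hc z Hz. apply (halfplane_closed _ z 0 phi Hc).
    intros psi [l [s [Hl [Hs ->]]]]. specialize (Hs z Hz). unfold P, scal in *; simpl in *. nra.
  - intros Hk. destruct (F1 Om Hi) as [psi0 Hpsi0]. apply closure_iff. intros e He.
    assert (Hn : 0 <= n2 psi0) by (unfold n2; pose proof (pow2_ge_0 (fst psi0)); pose proof (pow2_ge_0 (snd psi0)); lra).
    set (eta := Rmin 1 (e / (n2 psi0 + 1))).
    assert (He1 : eta <= 1) by apply Rmin_l.
    assert (He2 : eta <= e / (n2 psi0 + 1)) by apply Rmin_r.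
    assert (He0 : 0 < eta) by (apply Rmin_pos; [lra|apply Rdiv_lt_0_compat; lra]).
    exists (fst phi + eta * fst psi0, snd phi + eta * snd psi0). split.
    + exists eta, (fst phi / eta + fst psi0, snd phi / eta + snd psi0). split; [lra|split].
      * intros z Hz. specialize (Hk z Hz). specialize (Hpsi0 z Hz). unfold P in Hk. simpl.
        replace ((fst phi / eta + fst psi0) * fst z - (snd phi / eta + snd psi0) * snd z)
          with ((fst phi * fst z - snd phi * snd z) / eta + (fst psi0 * fst z - snd psi0 * snd z)) by (field; lra).
        assert (0 <= (fst phi * fst z - snd phi * snd z) / eta) by (unfold Rdiv; apply Rmult_le_pos; [lra|left; apply Rinv_0_lt_compat; lra]).
        lra.
      * unfold scal; simpl. f_equal; field; lra.
    + replace (d2 phi _) with (eta^2 * n2 psi0) by (unfold d2, n2; simpl; ring).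
      assert (eta^2 <= eta) by nra.
      assert (eta * (n2 psi0 + 1) <= e).
      { apply Rmult_le_reg_r with (/ (n2 psi0 + 1)). apply Rinv_0_lt_compat; lra.
        rewrite Rmult_assoc, Rinv_r by lra. unfold Rdiv in He2. lra. }
      assert (eta^2 * n2 psi0 <= eta * n2 psi0) by (apply Rmult_le_compat_r; lra). lra.
Qed.

Definition det (u v : pt) : R := fst u * snd v - snd u * fst v.

Lemma pow2_gt_0 x : x <> 0 -> 0 < x^2.
Proof. intros H. destruct (Rlt_or_le 0 x). nra. destruct H0. nra. exfalso; auto. Qed.

Lemma div_gt0 x y : x * y > 0 -> x / y > 0.
Proof.
  intros H. assert (y <> 0) by (intro E; subst; lra).
  replace (x / y) with (x * y / y^2) by (field; auto).
  apply Rdiv_lt_0_compat; [lra|apply pow2_gt_0; auto].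
Qed.

Section Cone.
Variable Cn : pset.
Hypothesis Hcl : is_closed Cn.
Hypothesis Hcv : is_convex Cn.
Hypothesis Hcone : forall l a, 0 <= l -> Cn a -> Cn (scal l a).

Lemma C_eq a b : Cn a -> a = b -> Cn b.
Proof. intros H <-; auto. Qed.

Lemma comb u v al be : Cn u -> Cn v -> 0 <= al -> 0 <= be ->
  Cn (al * fst u + be * fst v, al * snd u + be * snd v).
Proof.
  intros Hu Hv Ha Hb.
  destruct (Req_dec (al + be) 0) as [E|E].
  - assert (al = 0) by lra. assert (be = 0) by lra. subst.
    apply (C_eq (scal 0 u)); [apply Hcone; auto; lra|]. unfold scal; f_equal; ring.
  - set (s := al + be). set (t := al / s).
    assert (Hs : 0 < s) by (unfold s; lra).
    assert (Ht : 0 <= t <= 1).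
    { unfold t; split. apply Rmult_le_pos; [lra|left; apply Rinv_0_lt_compat; lra].
      apply Rmult_le_reg_r with s; auto. unfold Rdiv. rewrite Rmult_assoc, Rinv_l by lra. unfold s; lra. }
    pose proof (Hcv u v t Hu Hv Ht) as Hm.
    apply (C_eq (scal s (t * fst u + (1 - t) * fst v, t * snd u + (1 - t) * snd v))); [apply Hcone; auto; lra|].
    unfold scal, t, s; simpl; f_equal; field; lra.
Qed.

Lemma lin_sign (a b : R) (y : pt) : fst y * a + snd y * b <> 0 ->
  exists e, 0 < e /\ forall y', d2 y y' < e -> (fst y' * a + snd y' * b) * (fst y * a + snd y * b) > 0.
Proof.
  intros HL. set (L := fst y * a + snd y * b).
  assert (HL2 : 0 < L^2) by (apply pow2_gt_0; auto).
  assert (Hab : 0 <= a^2 + b^2) by (pose proof (pow2_ge_0 a); pose proof (pow2_ge_0 b); lra).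
  exists (L^2 / (a^2 + b^2 + 1)). split; [apply Rdiv_lt_0_compat; lra|].
  intros y' Hy'. set (L' := fst y' * a + snd y' * b).
  assert (H1 : (L' - L)^2 <= d2 y y' * (a^2 + b^2)).
  { unfold L, L', d2. pose proof (pow2_ge_0 ((fst y - fst y') * b - (snd y - snd y') * a)). nra. }
  assert (H2 : d2 y y' * (a^2 + b^2) <= L^2 / (a^2 + b^2 + 1) * (a^2 + b^2)).
  { apply Rmult_le_compat_r; lra. }
  assert (H3 : L^2 / (a^2 + b^2 + 1) * (a^2 + b^2) < L^2).
  { unfold Rdiv. assert (/ (a^2 + b^2 + 1) * (a^2 + b^2) < 1).
    { apply Rmult_lt_reg_l with (a^2 + b^2 + 1); [lra|]. rewrite <- Rmult_assoc, Rinv_r by lra. lra. }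
    nra. }
  pose proof (pow2_ge_0 L'). nra.
Qed.

Lemma decomp u v y : det u v <> 0 ->
  y = (det y v / det u v * fst u + det u y / det u v * fst v,
       det y v / det u v * snd u + det u y / det u v * snd v).
Proof.
  intros HD. rewrite (pair_eq y) at 1. unfold det in *. f_equal; field; auto.
Qed.

Lemma coef_sign u v y : det u v <> 0 -> det y v <> 0 ->
  exists e, 0 < e /\ forall y', d2 y y' < e -> det y' v / det u v * (det y v / det u v) > 0.
Proof.
  intros HD Hy.
  destruct (lin_sign (snd v) (- fst v) y) as [e [He H]].
  { unfold det in Hy. replace (fst y * snd v + snd y * - fst v) with (fst y * snd v - snd y * fst v) by ring. auto. }
  exists e; split; auto. intros y' Hy'. specialize (H y' Hy').
  replace (det y' v / det u v * (det y v / det u v)) with ((det y' v * det y v) / (det u v)^2) by (field; auto).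
  apply Rdiv_lt_0_compat; [|apply pow2_gt_0; auto].
  unfold det. replace (fst y' * snd v - snd y' * fst v) with (fst y' * snd v + snd y' * - fst v) by ring.
  replace (fst y * snd v - snd y * fst v) with (fst y * snd v + snd y * - fst v) by ring. lra.
Qed.

Lemma coef_sign2 u v y : det u v <> 0 -> det u y <> 0 ->
  exists e, 0 < e /\ forall y', d2 y y' < e -> det u y' / det u v * (det u y / det u v) > 0.
Proof.
  intros HD Hy.
  destruct (lin_sign (- snd u) (fst u) y) as [e [He H]].
  { unfold det in Hy. replace (fst y * - snd u + snd y * fst u) with (fst u * snd y - snd u * fst y) by ring. auto. }
  exists e; split; auto. intros y' Hy'. specialize (H y' Hy').
  replace (det u y' / det u v * (det u y / det u v)) with ((det u y' * det u y) / (det u v)^2) by (field; auto).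
  apply Rdiv_lt_0_compat; [|apply pow2_gt_0; auto].
  unfold det. replace (fst u * snd y' - snd u * fst y') with (fst y' * - snd u + snd y' * fst u) by ring.
  replace (fst u * snd y - snd u * fst y) with (fst y * - snd u + snd y * fst u) by ring. lra.
Qed.

Lemma I1 u v y : Cn u -> Cn v -> det u v <> 0 ->
  det y v / det u v > 0 -> det u y / det u v > 0 -> interior Cn y.
Proof.
  intros Hu Hv HD Ha Hb.
  assert (Hy1 : det y v <> 0). { intros E. rewrite E in Ha. unfold Rdiv in Ha. lra. }
  assert (Hy2 : det u y <> 0). { intros E. rewrite E in Hb. unfold Rdiv in Hb. lra. }
  destruct (coef_sign u v y HD Hy1) as [e1 [He1 H1]].
  destruct (coef_sign2 u v y HD Hy2) as [e2 [He2 H2]].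
  apply interior_iff. exists (Rmin e1 e2). split; [apply Rmin_pos; auto|].
  intros y' Hy'. specialize (H1 y' (Rlt_le_trans _ _ _ Hy' (Rmin_l _ _))).
  specialize (H2 y' (Rlt_le_trans _ _ _ Hy' (Rmin_r _ _))).
  apply (C_eq _ _ (comb u v (det y' v / det u v) (det u y' / det u v) Hu Hv ltac:(nra) ltac:(nra))).
  symmetry. apply decomp; auto.
Qed.

Lemma I2 u v : Cn u -> Cn v -> Cn (- fst v, - snd v) -> det u v <> 0 -> interior Cn u.
Proof.
  intros Hu Hv Hv' HD.
  assert (Hy1 : det u v <> 0) by auto.
  destruct (coef_sign u v u HD Hy1) as [e1 [He1 H1]].
  apply interior_iff. exists e1. split; auto.
  intros y' Hy'. specialize (H1 y' Hy').
  replace (det u v / det u v) with 1 in H1 by (field; auto).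
  destruct (Rle_or_lt 0 (det u y' / det u v)) as [Hb|Hb].
  - apply (C_eq _ _ (comb u v (det y' v / det u v) (det u y' / det u v) Hu Hv ltac:(nra) Hb)).
    symmetry. apply decomp; auto.
  - apply (C_eq _ _ (comb u _ (det y' v / det u v) (- (det u y' / det u v)) Hu Hv' ltac:(nra) ltac:(lra))).
    destruct y' as [y1 y2]. unfold det in *; simpl in *. f_equal; field; auto.
Qed.


Lemma n2_pos c : c <> (0,0) -> 0 < n2 c.
Proof.
  intros H. unfold n2. destruct c as [c1 c2]; simpl.
  destruct (Req_dec c1 0) as [E1|E1]; [destruct (Req_dec c2 0) as [E2|E2]|].
  - subst; exfalso; auto.
  - pose proof (pow2_gt_0 _ E2). pose proof (pow2_ge_0 c1). lra.
  - pose proof (pow2_gt_0 _ E1). pose proof (pow2_ge_0 c2). lra.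
Qed.

Lemma n2_ge0 c : 0 <= n2 c.
Proof. unfold n2. pose proof (pow2_ge_0 (fst c)). pose proof (pow2_ge_0 (snd c)). lra. Qed.

Lemma seg_bdry a b : Cn a -> ~ Cn b ->
  exists t, 0 <= t < 1 /\ boundary Cn (fst a + t * (fst b - fst a), snd a + t * (snd b - snd a)).
Proof.
  intros Ha Hb.
  set (f := fun t => (fst a + t * (fst b - fst a), snd a + t * (snd b - snd a))).
  set (T := fun t => 0 <= t <= 1 /\ Cn (f t)).
  assert (HT1 : bound T) by (exists 1; intros t [Ht _]; lra).
  assert (HT2 : exists t, T t).
  { exists 0. split; [lra|]. apply (C_eq a); auto. unfold f; destruct a; simpl; f_equal; ring. }
  destruct (completeness T HT1 HT2) as [ts [Hub Hlub]].
  assert (H0 : 0 <= ts) by (destruct HT2 as [t0 Ht0]; pose proof (Hub t0 Ht0); destruct Ht0; lra).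
  assert (H1 : ts <= 1) by (apply Hlub; intros t [Ht _]; lra).
  set (K := d2 a b).
  assert (HK : 0 <= K) by apply d2_ge0.
  assert (Hd : forall s t, d2 (f s) (f t) = (s - t)^2 * K).
  { intros s t. unfold f, K, d2; simpl. ring. }
  assert (Hin : Cn (f ts)).
  { apply Hcl. apply closure_iff. intros e He.
    set (r := Rmin 1 (e / (K + 1))).
    assert (Hr0 : 0 < r) by (apply Rmin_pos; [lra|apply Rdiv_lt_0_compat; lra]).
    assert (Hr1 : r <= 1) by apply Rmin_l.
    assert (Hr2 : r <= e / (K + 1)) by apply Rmin_r.
    assert (Hex : exists t, T t /\ ts - r < t).
    { apply NNPP. intros Hn. assert (ts <= ts - r); [|lra].
      apply Hlub. intros t Ht. apply Rnot_lt_le. intros Hlt. apply Hn. exists t; split; auto. }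
    destruct Hex as [t [[Ht Hft] Htr]]. pose proof (Hub t (conj Ht Hft)).
    exists (f t). split; auto. rewrite Hd.
    assert ((ts - t)^2 <= r) by nra.
    assert (r * (K + 1) <= e).
    { apply Rmult_le_reg_r with (/ (K + 1)). apply Rinv_0_lt_compat; lra.
      rewrite Rmult_assoc, Rinv_r by lra. unfold Rdiv in Hr2. lra. }
    assert ((ts - t)^2 * K <= r * K) by (apply Rmult_le_compat_r; lra).
    nra. }
  assert (Hlt : ts < 1).
  { destruct (Rle_lt_or_eq_dec _ _ H1) as [h|h]; auto. exfalso. apply Hb.
    apply (C_eq (f ts)); auto. rewrite h. unfold f; destruct b; simpl; f_equal; ring. }
  exists ts. split; [lra|]. split; [apply in_closure; exact Hin|].
  intros Hint. apply interior_iff in Hint. destruct Hint as [e [He Hball]].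
  set (dl := Rmin (1 - ts) (Rmin 1 (e / (K + 1)))).
  assert (Hdl0 : 0 < dl) by (apply Rmin_pos; [lra|apply Rmin_pos; [lra|apply Rdiv_lt_0_compat; lra]]).
  assert (Hdl1 : dl <= 1 - ts) by apply Rmin_l.
  assert (Hdl2 : dl <= Rmin 1 (e / (K + 1))) by apply Rmin_r.
  assert (Hdl3 : dl <= 1) by (pose proof (Rmin_l 1 (e / (K+1))); lra).
  assert (Hdl4 : dl <= e / (K+1)) by (pose proof (Rmin_r 1 (e / (K+1))); lra).
  assert (Hc : Cn (f (ts + dl))).
  { apply Hball. change (d2 (f ts) (f (ts + dl)) < e). rewrite Hd.
    replace ((ts - (ts + dl))^2) with (dl^2) by ring.
    assert (dl * (K + 1) <= e).
    { apply Rmult_le_reg_r with (/ (K + 1)). apply Rinv_0_lt_compat; lra.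
      rewrite Rmult_assoc, Rinv_r by lra. unfold Rdiv in Hdl4. lra. }
    assert (dl^2 * K <= dl * K) by (apply Rmult_le_compat_r; nra).
    nra. }
  assert (ts + dl <= ts) by (apply Hub; split; [lra|auto]). lra.
Qed.

Lemma bd_scal a l : boundary Cn a -> 0 < l -> boundary Cn (scal l a).
Proof.
  intros [Hc Hni] Hl. split.
  - apply closure_iff. intros e He. apply closure_iff with (e := e / l^2) in Hc.
    2: { apply Rdiv_lt_0_compat; [lra|nra]. }
    destruct Hc as [b [Hb Hd]]. exists (scal l b). split; [apply Hcone; auto; lra|].
    replace (d2 (scal l a) (scal l b)) with (l^2 * d2 a b) by (unfold d2, scal; simpl; ring).
    apply Rmult_lt_compat_l with (r := l^2) in Hd; [|nra].
    replace (l^2 * (e / l^2)) with e in Hd by (field; lra). lra.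
  - intros Hint. apply Hni. apply interior_iff in Hint. destruct Hint as [e [He Hb]].
    apply interior_iff. exists (e / l^2). split; [apply Rdiv_lt_0_compat; [lra|nra]|].
    intros b Hd. assert (Cn (scal l b)).
    { apply Hb. replace (d2 (scal l a) (scal l b)) with (l^2 * d2 a b) by (unfold d2, scal; simpl; ring).
      apply Rmult_lt_compat_l with (r := l^2) in Hd; [|nra].
      replace (l^2 * (e / l^2)) with e in Hd by (field; lra). lra. }
    apply (C_eq (scal (/ l) (scal l b))); [apply Hcone; auto; left; apply Rinv_0_lt_compat; lra|].
    unfold scal; destruct b; simpl; f_equal; field; lra.
Qed.

Hypothesis Hnz : exists c, Cn c /\ c <> (0,0).
Hypothesis Hnf : exists phi, ~ Cn phi.

Lemma C0 : Cn (0,0).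
Proof.
  destruct Hnz as [c [Hc _]]. apply (C_eq (scal 0 c)); [apply Hcone; auto; lra|].
  unfold scal; f_equal; ring.
Qed.

Lemma bd0 : boundary Cn (0,0).
Proof.
  split; [apply in_closure; apply C0|].
  intros Hint. apply interior_iff in Hint. destruct Hint as [e [He Hb]].
  destruct Hnf as [phi Hphi]. apply Hphi.
  pose proof (n2_ge0 phi).
  set (eta := Rmin 1 (e / (n2 phi + 1))).
  assert (He0 : 0 < eta) by (apply Rmin_pos; [lra|apply Rdiv_lt_0_compat; lra]).
  assert (He1 : eta <= 1) by apply Rmin_l.
  assert (He2 : eta <= e / (n2 phi + 1)) by apply Rmin_r.
  assert (Cn (scal eta phi)).
  { apply Hb. replace (d2 (0,0) (scal eta phi)) with (eta^2 * n2 phi) by (unfold d2, n2, scal; simpl; ring).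
    assert (eta * (n2 phi + 1) <= e).
    { apply Rmult_le_reg_r with (/ (n2 phi + 1)). apply Rinv_0_lt_compat; lra.
      rewrite Rmult_assoc, Rinv_r by lra. unfold Rdiv in He2. lra. }
    assert (eta^2 * n2 phi <= eta * n2 phi) by (apply Rmult_le_compat_r; nra). nra. }
  apply (C_eq (scal (/ eta) (scal eta phi))); [apply Hcone; auto; left; apply Rinv_0_lt_compat; lra|].
  unfold scal; destruct phi; simpl; f_equal; field; lra.
Qed.

Lemma ray_bd d a : boundary Cn d -> ray d a -> boundary Cn a.
Proof.
  intros Hd [t [Ht ->]]. destruct (Rle_lt_or_eq_dec _ _ Ht) as [h|h].
  - apply bd_scal; auto.
  - subst. replace (scal 0 d) with ((0,0) : pt) by (unfold scal; f_equal; ring). apply bd0.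
Qed.

Lemma not_closure_ball phi : ~ Cn phi -> exists e, 0 < e /\ forall b, Cn b -> e <= d2 phi b.
Proof.
  intros Hn. apply NNPP. intros H. apply Hn. apply Hcl. apply closure_iff. intros e He.
  apply NNPP. intros H2. apply H. exists e. split; auto. intros b Hb.
  apply Rnot_lt_le. intros Hlt. apply H2. exists b. auto.
Qed.

Lemma exists_bd : exists d, d <> (0,0) /\ boundary Cn d.
Proof.
  destruct Hnz as [c [Hc Hc0]]. destruct Hnf as [phi Hphi].
  assert (Hnc := n2_pos c Hc0).
  assert (Hex : exists phi', ~ Cn phi' /\ det c phi' <> 0).
  { destruct (Req_dec (det c phi) 0) as [E|E]; [|exists phi; auto].
    destruct (not_closure_ball phi Hphi) as [e [He Hb]].
    set (eta := sqrt (e / (2 * n2 c))).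
    assert (Heta : 0 < eta) by (apply sqrt_lt_R0; apply Rdiv_lt_0_compat; lra).
    assert (Heta2 : eta^2 = e / (2 * n2 c)) by (apply pow2_sqrt; left; apply Rdiv_lt_0_compat; lra).
    exists (fst phi - eta * snd c, snd phi + eta * fst c). split.
    - intros Hin. specialize (Hb _ Hin).
      replace (d2 phi (fst phi - eta * snd c, snd phi + eta * fst c)) with (eta^2 * n2 c) in Hb by (unfold d2, n2; simpl; ring).
      rewrite Heta2 in Hb. replace (e / (2 * n2 c) * n2 c) with (e/2) in Hb by (field; lra). lra.
    - unfold det in *. simpl. replace (fst c * (snd phi + eta * fst c) - snd c * (fst phi - eta * snd c)) with
        ((fst c * snd phi - snd c * fst phi) + eta * n2 c) by (unfold n2; ring).
      rewrite E. nra. }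
  destruct Hex as [phi' [Hphi' Hdet]].
  destruct (seg_bdry c phi' Hc Hphi') as [t [Ht Hbd]].
  eexists; split; [|exact Hbd].
  intros E. injection E as E1 E2.
  assert (det c (fst c + t * (fst phi' - fst c), snd c + t * (snd phi' - snd c)) = t * det c phi') by (unfold det; simpl; ring).
  rewrite E1, E2 in H. unfold det in H at 1; simpl in H.
  assert (t = 0).
  { assert (t * det c phi' = 0) by lra. destruct (Rmult_integral _ _ H0); auto. contradiction. }
  subst t. apply Hc0. rewrite (pair_eq c). f_equal; lra.
Qed.

Lemma bd_in a : boundary Cn a -> Cn a.
Proof. intros [H _]. apply Hcl; auto. Qed.

Lemma collinear u v : det u v = 0 -> u <> (0,0) -> v = scal ((fst u * fst v + snd u * snd v) / n2 u) u.
Proof.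
  intros HD Hu. pose proof (n2_pos u Hu). unfold scal, det, n2 in *.
  destruct u as [u1 u2], v as [v1 v2]; simpl in *. f_equal; field_simplify_eq; try lra; [assert (u2 * (u1 * v2 - u2 * v1) = 0) by (rewrite HD; ring); lra | assert (u1 * (u1 * v2 - u2 * v1) = 0) by (rewrite HD; ring); lra].
Qed.

Lemma three d0 d1 w : boundary Cn d0 -> boundary Cn d1 -> boundary Cn w ->
  d0 <> (0,0) -> d1 <> (0,0) -> w <> (0,0) ->
  ~ ray d0 d1 -> ~ ray d0 w -> ~ ray d1 w -> False.
Proof.
  intros B0 B1 Bw N0 N1 Nw R01 R0w R1w.
  pose proof (bd_in _ B0) as K0. pose proof (bd_in _ B1) as K1. pose proof (bd_in _ Bw) as Kw.
  destruct B0 as [_ I0]. destruct B1 as [_ I1']. destruct Bw as [_ Iw].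
  destruct (Req_dec (det d0 d1) 0) as [HD|HD].
  - pose proof (collinear d0 d1 HD N0) as E1.
    set (k := (fst d0 * fst d1 + snd d0 * snd d1) / n2 d0) in E1.
    destruct d0 as [x0 y0], d1 as [x1 y1], w as [x2 y2]. unfold scal in E1; simpl in E1.
    injection E1 as E1 E2.
    destruct (Rtotal_order k 0) as [hk|[hk|hk]].
    + assert (Km : Cn (- x0, - y0)).
      { apply (C_eq (scal (- / k) (x1, y1))); [apply Hcone; auto; left; apply Ropp_0_gt_lt_contravar; apply Rinv_lt_0_compat; auto|].
        unfold scal; simpl; rewrite E1, E2; f_equal; field; lra. }
      destruct (Req_dec (det (x0, y0) (x2, y2)) 0) as [HD'|HD'].
      * pose proof (collinear (x0,y0) (x2,y2) HD' N0) as E3.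
        set (k' := (fst (x0, y0) * fst (x2, y2) + snd (x0, y0) * snd (x2, y2)) / n2 (x0, y0)) in E3.
        unfold scal in E3; simpl in E3. injection E3 as E3 E4.
        destruct (Rtotal_order k' 0) as [hk'|[hk'|hk']].
        -- apply R1w. exists (k' / k). split; [apply Rlt_le; apply div_gt0; nra|].
           unfold scal; simpl; rewrite E1, E2, E3, E4; f_equal; field; lra.
        -- apply Nw. rewrite E3, E4, hk'. f_equal; ring.
        -- apply R0w. exists k'. split; [lra|]. unfold scal; simpl; rewrite E3, E4; auto.
      * apply Iw. apply (I2 (x2,y2) (x0,y0)); auto. unfold det in *; simpl in *. lra.
    + apply N1. rewrite E1, E2, hk. f_equal; ring.
    + apply R01. exists k. split; [lra|]. unfold scal; simpl; rewrite E1, E2; auto.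
  - destruct d0 as [x0 y0], d1 as [x1 y1].
    assert (Hab : exists a b, w = (a * x0 + b * x1, a * y0 + b * y1)).
    { pose proof (decomp (x0,y0) (x1,y1) w HD) as E. simpl in E. eexists; eexists; exact E. }
    destruct Hab as [a [b ->]].
    unfold det in HD; simpl in HD.
    assert (HD2 : 0 < (x0 * y1 - y0 * x1)^2) by (apply pow2_gt_0; auto).
    destruct (Rtotal_order a 0) as [ha|[ha|ha]]; destruct (Rtotal_order b 0) as [hb|[hb|hb]].
    +
      assert (Km : Cn (- x0, - y0)).
      { apply (C_eq _ _ (comb _ (x1,y1) (/ (- a)) (b / a) Kw K1 ltac:(left; apply Rinv_0_lt_compat; lra) ltac:(left; apply div_gt0; nra))).
        simpl; f_equal; field; lra. }
      apply I1'. apply (I2 (x1,y1) (x0,y0)); auto. unfold det; simpl; lra.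
    +
      subst b. assert (Km : Cn (- x0, - y0)).
      { apply (C_eq (scal (- / a) (a * x0 + 0 * x1, a * y0 + 0 * y1))); [apply Hcone; auto; left; apply Ropp_0_gt_lt_contravar; apply Rinv_lt_0_compat; auto|].
        unfold scal; simpl; f_equal; field; lra. }
      apply I1'. apply (I2 (x1,y1) (x0,y0)); auto. unfold det; simpl; lra.
    +
      apply I1'. apply (I1 _ (x0,y0) _ Kw K0); unfold det; simpl.
      * intro E. assert (b * (x0 * y1 - y0 * x1) = 0) by lra.
        destruct (Rmult_integral _ _ H); lra.
      * apply div_gt0. assert (0 < b * (x0*y1-y0*x1)^2) by (apply Rmult_lt_0_compat; lra). lra.
      * apply div_gt0. assert (0 < -a*b) by nra. assert (0 < (-a*b) * (x0*y1-y0*x1)^2) by (apply Rmult_lt_0_compat; lra). lra.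
    +
      subst a. assert (Km : Cn (- x1, - y1)).
      { apply (C_eq (scal (- / b) (0 * x0 + b * x1, 0 * y0 + b * y1))); [apply Hcone; auto; left; apply Ropp_0_gt_lt_contravar; apply Rinv_lt_0_compat; auto|].
        unfold scal; simpl; f_equal; field; lra. }
      apply I0. apply (I2 (x0,y0) (x1,y1)); auto.
    + apply Nw. subst. f_equal; ring.
    + apply R1w. exists b. split; [lra|]. subst. unfold scal; simpl; f_equal; ring.
    +
      apply I0. apply (I1 _ (x1,y1) _ Kw K1); unfold det; simpl.
      * intro E. assert (a * (x0 * y1 - y0 * x1) = 0) by lra.
        destruct (Rmult_integral _ _ H); lra.
      * apply div_gt0. assert (0 < a * (x0*y1-y0*x1)^2) by (apply Rmult_lt_0_compat; lra). lra.
      * apply div_gt0. assert (0 < -a*b) by nra. assert (0 < (-a*b) * (x0*y1-y0*x1)^2) by (apply Rmult_lt_0_compat; lra). lra.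
    + apply R0w. exists a. split; [lra|]. subst. unfold scal; simpl; f_equal; ring.
    + apply Iw. apply (I1 (x0,y0) (x1,y1)); auto; unfold det; simpl; apply div_gt0.
      * assert (0 < a * (x0*y1-y0*x1)^2) by (apply Rmult_lt_0_compat; lra). lra.
      * assert (0 < b * (x0*y1-y0*x1)^2) by (apply Rmult_lt_0_compat; lra). lra.
Qed.

Lemma structure : exists d0 d1, d0 <> (0,0) /\ d1 <> (0,0) /\
  (forall a, boundary Cn a <-> ray d0 a \/ ray d1 a).
Proof.
  destruct exists_bd as [d0 [N0 B0]].
  assert (R0 : ray d0 (0,0)) by (exists 0; split; [lra|]; unfold scal; f_equal; ring).
  destruct (classic (exists d1, boundary Cn d1 /\ d1 <> (0,0) /\ ~ ray d0 d1)) as [[d1 [B1 [N1 R01]]]|Hno].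
  - exists d0, d1. split; auto. split; auto. intros a. split.
    + intros Ba. destruct (classic (a = (0,0))) as [->|Na]; [left; auto|].
      destruct (classic (ray d0 a)) as [|h0]; [left; auto|].
      destruct (classic (ray d1 a)) as [|h1]; [right; auto|].
      exfalso. apply (three d0 d1 a); auto.
    + intros [H|H]; [apply (ray_bd d0)|apply (ray_bd d1)]; auto.
  - exists d0, d0. split; auto. split; auto. intros a. split.
    + intros Ba. left. destruct (classic (a = (0,0))) as [->|Na]; auto.
      apply NNPP. intros h. apply Hno. exists a. auto.
    + intros [H|H]; apply (ray_bd d0); auto.
Qed.

End Cone.

Lemma Kst_closed Om : is_closed (Kst Om).
Proof. intros phi Hc z Hz. apply (halfplane_closed _ z 0 phi Hc). intros psi Hpsi. apply Hpsi; auto. Qed.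

Lemma Kst_convex Om : is_convex (Kst Om).
Proof. intros a b t Ha Hb Ht z Hz. specialize (Ha z Hz). specialize (Hb z Hz). unfold P in *; simpl. nra. Qed.

Lemma Kst_cone Om : forall l a, 0 <= l -> Kst Om a -> Kst Om (scal l a).
Proof. intros l a Hl Ha z Hz. specialize (Ha z Hz). unfold P, scal in *; simpl. nra. Qed.

Lemma antipolar_nz Om psi : prop_i Om -> antipolar Om psi -> psi <> (0,0).
Proof. intros (Hne & _) H E. subst. destruct Hne as [z Hz]. specialize (H z Hz). simpl in H. lra. Qed.

Lemma Kst_nz Om : prop_i Om -> exists c, Kst Om c /\ c <> (0,0).
Proof.
  intros Hi. destruct (F1 Om Hi) as [psi Hpsi]. exists psi. split; [|eapply antipolar_nz; eauto].
  intros z Hz. specialize (Hpsi z Hz). unfold P. lra.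
Qed.

Lemma Kst_nf Om : prop_i Om -> exists phi, ~ Kst Om phi.
Proof.
  intros Hi. pose proof Hi as ([w Hw] & _). pose proof (n2_pos w (prop_i_nz Om w Hi Hw)) as Hn2.
  exists (- fst w, snd w). intros H. specialize (H w Hw). unfold P, n2 in *; simpl in *. nra.
Qed.

Lemma X_not_interior (A : pset) u v : (forall y, A y -> P y v >= 0) -> P u v = 0 -> v <> (0,0) -> ~ interior A u.
Proof.
  intros HA Hu Hv Hint. apply interior_iff in Hint. destruct Hint as [e [He Hb]].
  pose proof (n2_pos v Hv) as Hn.
  set (eta := sqrt (e / (2 * n2 v))).
  assert (Heta : 0 < eta) by (apply sqrt_lt_R0; apply Rdiv_lt_0_compat; lra).
  assert (Heta2 : eta^2 = e / (2 * n2 v)) by (apply pow2_sqrt; left; apply Rdiv_lt_0_compat; lra).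
  assert (Hy : A (fst u - eta * fst v, snd u + eta * snd v)).
  { apply Hb. replace (d2 u _) with (eta^2 * n2 v) by (unfold d2, n2; simpl; ring).
    rewrite Heta2. replace (e / (2 * n2 v) * n2 v) with (e/2) by (field; lra). lra. }
  specialize (HA _ Hy). unfold P in *; simpl in *.
  replace ((fst u - eta * fst v) * fst v - (snd u + eta * snd v) * snd v) with
    ((fst u * fst v - snd u * snd v) - eta * n2 v) in HA by (unfold n2; ring).
  rewrite Hu in HA. nra.
Qed.

Lemma pos_star Om phi : prop_i Om -> prop_star Om -> Kst Om phi -> phi <> (0,0) ->
  forall z, Om z -> P phi z > 0.
Proof.
  intros Hi Hs Hk Hn z Hz. pose proof Hi as (Hne & Hcv & Hcl & H0 & Hsc).
  assert (Hk0 := Hk z Hz). destruct (Rle_lt_or_eq_dec 0 (P phi z)) as [h|h]; [lra|auto|].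
  exfalso. apply (Hs 2 ltac:(lra) (scal 2 z)). split; [exists z; auto|].
  split; [apply in_closure; apply (Hsc 2 ltac:(lra)); exists z; auto|].
  apply (X_not_interior Om (scal 2 z) phi); auto.
  - intros y Hy. rewrite P_sym. apply Hk; auto.
  - unfold P, scal in *; simpl. nra.
Qed.

Lemma compact_min Om d R2 : prop_i Om -> d <> (0,0) ->
  (forall z, Om z -> P d z > 0) ->
  exists m, 0 < m /\ forall z, Om z -> n2 z <= R2 -> P d z >= m.
Proof.
  intros Hi Hd Hpos. pose proof Hi as (Hne & Hcv & Hcl & H0 & Hsc).
  pose proof (n2_pos d Hd) as Hnd.
  apply NNPP; intros Hno.
  assert (Hseq : forall n : nat, exists z, Om z /\ n2 z <= R2 /\ P d z < / (INR n + 1)).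
  { intros n. apply NNPP; intros Hn. apply Hno. exists (/ (INR n + 1)). split.
    - apply Rinv_0_lt_compat. pose proof (pos_INR n); lra.
    - intros z Hz HR. apply Rnot_lt_ge. intros Hlt. apply Hn. exists z; auto. }
  destruct (choice_nat _ Hseq) as [f Hf].
  set (h := fun z : pt => snd d * fst z + fst d * snd z).
  set (M := n2 d + R2 + 1).
  assert (Hb : forall n, -M <= h (f n) <= M).
  { intros n. destruct (Hf n) as [Hz [HR _]]. pose proof (n2_ge0 (f n)).
    assert (Hh : (h (f n))^2 <= n2 d * n2 (f n)).
    { unfold h, n2. pose proof (pow2_ge_0 (fst d * fst (f n) - snd d * snd (f n))). nra. }
    assert (n2 d * n2 (f n) <= n2 d * R2) by (apply Rmult_le_compat_l; lra).
    assert (n2 d * R2 <= M^2) by (unfold M; nra).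
    split.
    - apply sq_le_abs; [lra|unfold M; lra].
    - assert (- M <= - h (f n)); [apply sq_le_abs; [nra|unfold M; lra]|lra]. }
  destruct (Rtopology.Bolzano_Weierstrass (fun n => h (f n)) (fun c => -M <= c <= M)
              (Rtopology.compact_P3 (-M) M) Hb) as [l Hl].
  set (zs := (snd d * l / n2 d, fst d * l / n2 d)).
  assert (Hid : forall z, d2 zs z * n2 d = (P d z)^2 + (h z - l)^2).
  { intros z. unfold zs, d2, P, h. unfold n2 in *. simpl. field. lra. }
  assert (Hzs : Om zs).
  { apply Hcl. apply closure_iff. intros e He.
    set (q := e * n2 d / 2).
    assert (Hq : 0 < q) by (unfold q; nra).
    destruct (archi q Hq) as [N HN].
    assert (Hdl : 0 < sqrt q) by (apply sqrt_lt_R0; auto).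
    destruct (Hl (Rtopology.disc l (mkposreal _ Hdl)) N) as [p [Hp Hdisc]].
    { exists (mkposreal _ Hdl). intros x Hx. exact Hx. }
    unfold Rtopology.disc in Hdisc; simpl in Hdisc.
    exists (f p). destruct (Hf p) as [Hz [_ Hlt]]. split; auto.
    specialize (HN p Hp). pose proof (Hpos _ Hz) as Hp0.
    assert (/ (INR p + 1) <= 1).
    { rewrite <- Rinv_1. apply Rinv_le_contravar; [lra|]. pose proof (pos_INR p); lra. }
    assert (H1 : (P d (f p))^2 < q) by nra.
    assert (H2 : (h (f p) - l)^2 < q).
    { apply abs_lt_sq in Hdisc. rewrite pow2_sqrt in Hdisc; lra. }
    specialize (Hid (f p)).
    assert (d2 zs (f p) * n2 d < e * n2 d) by (unfold q in *; lra).
    apply Rmult_lt_reg_r with (n2 d); auto. }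
  specialize (Hpos _ Hzs). unfold P, zs in Hpos; simpl in Hpos.
  replace (fst d * (snd d * l / n2 d) - snd d * (fst d * l / n2 d)) with 0 in Hpos by (field; lra).
  lra.
Qed.

Lemma interior_bound Om psi0 : prop_i Om -> interior (Kst Om) psi0 ->
  exists eta, 0 < eta /\ forall z, Om z -> P psi0 z >= eta * sqrt (n2 z).
Proof.
  intros Hi Hint. apply interior_iff in Hint. destruct Hint as [e0 [He0 Hb]].
  exists (sqrt (e0 / 2)). split; [apply sqrt_lt_R0; lra|].
  intros z Hz. pose proof (n2_pos z (prop_i_nz Om z Hi Hz)) as Hn.
  set (S := sqrt (n2 z)). set (eta := sqrt (e0 / 2)).
  assert (HS : 0 < S) by (apply sqrt_lt_R0; auto).
  assert (HS2 : S * S = n2 z) by (apply sqrt_sqrt; lra).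
  assert (Heta2 : eta * eta = e0 / 2) by (apply sqrt_sqrt; lra).
  assert (Hy : Kst Om (fst psi0 - eta * fst z / S, snd psi0 + eta * snd z / S)).
  { apply Hb. replace (d2 psi0 _) with (eta * eta * n2 z / (S * S)) by (unfold d2, n2; simpl; field; lra).
    rewrite HS2. replace (eta * eta * n2 z / n2 z) with (eta * eta) by (field; lra). lra. }
  specialize (Hy z Hz). unfold P in *; simpl in Hy.
  replace ((fst psi0 - eta * fst z / S) * fst z - (snd psi0 + eta * snd z / S) * snd z)
    with ((fst psi0 * fst z - snd psi0 * snd z) - eta * (n2 z) / S) in Hy by (unfold n2; field; lra).
  rewrite <- HS2 in Hy. replace (eta * (S * S) / S) with (eta * S) in Hy by (field; lra). lra.
Qed.

Lemma dz Om d : prop_i Om -> prop_star Om -> boundary (Kst Om) d -> d <> (0,0) ->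
  dist_zero (ray d) (antipolar Om).
Proof.
  intros Hi Hs Bd Hd.
  assert (Kd : Kst Om d) by (apply Kst_closed; apply Bd).
  pose proof (pos_star Om d Hi Hs Kd Hd) as Hpos.
  destruct (F1 Om Hi) as [psi1 Hpsi1].
  assert (Kpsi1 : Kst Om psi1) by (intros z Hz; specialize (Hpsi1 z Hz); unfold P; lra).
  pose proof Hi as ([w Hw] & _).
  intros eps Heps.
  destruct (Req_dec (det d psi1) 0) as [HD|HD].
  - pose proof (collinear d psi1 HD Hd) as E.
    set (k := (fst d * fst psi1 + snd d * snd psi1) / n2 d) in E.
    assert (Hk : 0 < k).
    { specialize (Hpsi1 w Hw). rewrite E in Hpsi1. unfold scal in Hpsi1; simpl in Hpsi1.
      pose proof (Hpos w Hw) as Hp. assert (k * P d w >= 1) by (unfold P; lra).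
      destruct (Rle_or_lt k 0); auto. nra. }
    exists psi1, psi1. split; [exists k; split; [lra|auto]|]. split; auto.
    apply edist_lt; auto. replace (d2 psi1 psi1) with 0 by (unfold d2; ring). nra.
  - set (psi0 := (1 * fst d + 1 * fst psi1, 1 * snd d + 1 * snd psi1)).
    assert (Int : interior (Kst Om) psi0).
    { apply (I1 (Kst Om) (Kst_convex Om) (Kst_cone Om) d psi1 psi0 Kd Kpsi1 HD).
      - unfold psi0, det in *; simpl. replace ((1 * fst d + 1 * fst psi1) * snd psi1 - (1 * snd d + 1 * snd psi1) * fst psi1) with (fst d * snd psi1 - snd d * fst psi1) by ring.
        replace ((fst d * snd psi1 - snd d * fst psi1) / (fst d * snd psi1 - snd d * fst psi1)) with 1 by (field; auto). lra.
      - unfold psi0, det in *; simpl. replace (fst d * (1 * snd d + 1 * snd psi1) - snd d * (1 * fst d + 1 * fst psi1)) with (fst d * snd psi1 - snd d * fst psi1) by ring.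
        replace ((fst d * snd psi1 - snd d * fst psi1) / (fst d * snd psi1 - snd d * fst psi1)) with 1 by (field; auto). lra. }
    destruct (interior_bound Om psi0 Hi Int) as [eta [Heta Hbnd]].
    pose proof (n2_ge0 psi0) as Hn0.
    set (epsp := Rmin 1 (eps^2 / (n2 psi0 + 1))).
    assert (He0 : 0 < epsp) by (apply Rmin_pos; [lra|apply Rdiv_lt_0_compat; nra]).
    assert (He1 : epsp <= 1) by apply Rmin_l.
    assert (He2 : epsp <= eps^2 / (n2 psi0 + 1)) by apply Rmin_r.
    set (R := / (epsp * eta)).
    assert (HR : 0 < R) by (apply Rinv_0_lt_compat; nra).
    destruct (compact_min Om d (R^2) Hi Hd Hpos) as [m [Hm Hmin]].
    set (t := / m).
    assert (Ht : 0 < t) by (apply Rinv_0_lt_compat; auto).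
    exists (scal t d), (t * fst d + epsp * fst psi0, t * snd d + epsp * snd psi0).
    split; [exists t; split; [lra|auto]|]. split.
    + intros z Hz. change (P (t * fst d + epsp * fst psi0, t * snd d + epsp * snd psi0) z >= 1).
      pose proof (Hpos z Hz) as Hpd. pose proof (Hbnd z Hz) as Hb0.
      pose proof (sqrt_pos (n2 z)) as HSq.
      replace (P (t * fst d + epsp * fst psi0, t * snd d + epsp * snd psi0) z)
        with (t * P d z + epsp * P psi0 z) by (unfold P; simpl; ring).
      assert (0 <= P psi0 z) by nra.
      destruct (Rle_or_lt (n2 z) (R^2)) as [hz|hz].
      * specialize (Hmin z Hz hz). assert (Ht1 : t * P d z >= t * m) by (apply Rmult_ge_compat_l; lra).
        replace (t * m) with 1 in Ht1 by (unfold t; field; lra).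
        assert (0 <= epsp * P psi0 z) by (apply Rmult_le_pos; lra). lra.
      * assert (R < sqrt (n2 z)).
        { rewrite <- (sqrt_pow2 R) by lra. apply sqrt_lt_1_alt. split; [nra|auto]. }
        assert (epsp * eta * R = 1) by (unfold R; field; nra).
        assert (epsp * P psi0 z >= epsp * (eta * sqrt (n2 z))) by (apply Rmult_ge_compat_l; lra).
        assert (epsp * eta * R < epsp * eta * sqrt (n2 z)) by (apply Rmult_lt_compat_l; nra).
        assert (0 <= t * P d z) by nra. nra.
    + apply edist_lt; auto. unfold scal.
      replace (d2 _ _) with (epsp^2 * n2 psi0) by (unfold d2, n2; simpl; ring).
      assert (epsp * (n2 psi0 + 1) <= eps^2).
      { apply Rmult_le_reg_r with (/ (n2 psi0 + 1)). apply Rinv_0_lt_compat; lra.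
        rewrite Rmult_assoc, Rinv_r by lra. unfold Rdiv in He2. lra. }
      assert (epsp^2 * n2 psi0 <= epsp * n2 psi0) by (apply Rmult_le_compat_r; nra). nra.
Qed.

Lemma inv_lt1 l : 1 < l -> 0 < / l < 1.
Proof.
  intros H. split; [apply Rinv_0_lt_compat; lra|].
  apply Rmult_lt_reg_l with l; [lra|]. rewrite Rinv_r by lra. lra.
Qed.

Lemma backward Om : prop_i Om -> prop_starstar (antipolar Om) -> prop_star Om.
Proof.
  intros Hi Hss. pose proof Hi as (Hne & Hcv & Hcl & H0 & Hsc).
  unfold prop_starstar in Hss. rewrite (F4 Om Hi) in Hss.
  destruct Hss as [d0 [d1 [N0 [N1 [Hbd [Dz0 Dz1]]]]]].
  intros l Hl a [[s [Hs Ea]] [_ Hni]].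
  assert (Ha : Om a) by (apply (Hsc l Hl); exists s; auto).
  assert (Hna := n2_pos a (prop_i_nz Om a Hi Ha)).
  pose proof (inv_lt1 l Hl) as Hil.
  assert (Claim : forall eps, 0 < eps -> exists psi, antipolar Om psi /\ (P psi a)^2 < eps * n2 psi).
  { intros eps He. apply NNPP; intros Hno. apply Hni.
    assert (Hge : forall psi, antipolar Om psi -> eps * n2 psi <= (P psi a)^2).
    { intros psi Hpsi. apply Rnot_lt_le. intros Hlt. apply Hno. exists psi; auto. }
    apply interior_iff. exists (eps * (1 - /l)^2). split.
    { apply Rmult_lt_0_compat; auto. nra. }
    intros b Hb. apply F3; auto. intros psi Hpsi.
    change (P b psi >= 1). rewrite P_sym.
    set (X := P psi a).
    assert (HX : X >= l).
    { unfold X. rewrite Ea. specialize (Hpsi s Hs). unfold P, scal in *; simpl. nra. }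
    pose proof (P_diff_bound b a psi) as Hdb.
    rewrite (P_sym b psi), (P_sym a psi) in Hdb. fold X in Hdb.
    rewrite d2_sym in Hb.
    specialize (Hge psi Hpsi). fold X in Hge.
    pose proof (n2_ge0 psi).
    assert (Hq : (P psi b - X)^2 <= ((1 - / l) * X)^2).
    { assert (d2 b a * n2 psi <= eps * (1 - / l)^2 * n2 psi) by (apply Rmult_le_compat_r; lra).
      assert (eps * (1 - / l)^2 * n2 psi <= (1 - / l)^2 * X^2).
      { replace (eps * (1 - / l)^2 * n2 psi) with ((1 - / l)^2 * (eps * n2 psi)) by ring.
        apply Rmult_le_compat_l; [nra|lra]. }
      replace (((1 - / l) * X)^2) with ((1 - / l)^2 * X^2) by ring. lra. }
    pose proof (sq_le_abs (P psi b - X) ((1 - / l) * X) Hq ltac:(nra)).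
    assert (X * / l >= 1).
    { assert (X * / l >= l * / l) by (apply Rmult_ge_compat_r; lra). rewrite Rinv_r in H2 by lra. lra. }
    nra. }
  set (A := n2 a). set (ta := (snd a, fst a)). set (nta := (- snd a, - fst a)).
  assert (Hdich : forall r, 0 < r -> (exists u, Kst Om u /\ d2 u ta < r) \/ (exists u, Kst Om u /\ d2 u nta < r)).
  { intros r Hr. destruct (Claim (r/2) ltac:(lra)) as [psi [Hpsi Hlt]].
    assert (Kp : Kst Om psi) by (intros z Hz; specialize (Hpsi z Hz); unfold P; lra).
    pose proof (n2_pos psi (antipolar_nz Om psi Hi Hpsi)) as Hnp.
    set (k := sqrt (A / n2 psi)).
    assert (Hk0 : 0 <= k) by apply sqrt_pos.
    assert (Hk2 : k * k = A / n2 psi) by (apply sqrt_sqrt; left; apply Rdiv_lt_0_compat; unfold A; lra).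
    set (u := scal k psi).
    assert (Ku : Kst Om u) by (apply Kst_cone; auto).
    assert (Hnu : n2 u = A).
    { unfold u, scal, n2 in *; simpl. replace (k * fst psi * (k * fst psi * 1) + k * snd psi * (k * snd psi * 1)) with ((k * k) * (fst psi ^2 + snd psi ^2)) by ring.
      rewrite Hk2. field. lra. }
    set (Q := P u a).
    assert (HQ : Q^2 < r / 2 * A).
    { unfold Q, u. replace (P (scal k psi) a) with (k * P psi a) by (unfold P, scal; simpl; ring).
      replace ((k * P psi a)^2) with ((k * k) * (P psi a)^2) by ring. rewrite Hk2.
      replace (r / 2 * A) with (A / n2 psi * (r / 2 * n2 psi)) by (field; lra).
      apply Rmult_lt_compat_l; auto. apply Rdiv_lt_0_compat; unfold A; lra. }
    set (sg := fst u * snd a + snd u * fst a).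
    assert (Hlag : sg^2 + Q^2 = A * A).
    { rewrite <- Hnu at 1. unfold sg, Q, P, A, n2. ring. }
    assert (HA : 0 < A) by (unfold A; lra).
    destruct (Rle_or_lt 0 sg) as [hs|hs].
    - left. exists u. split; auto.
      assert (E : d2 u ta = n2 u - 2 * sg + A) by (unfold d2, ta, sg, A, n2; simpl; ring).
      rewrite E, Hnu.
      assert (sg <= A) by nra.
      assert ((A - sg) * A <= Q^2) by nra.
      assert ((A - sg) * A < r / 2 * A) by lra.
      assert (A - sg < r / 2) by (apply Rmult_lt_reg_r with A; auto). lra.
    - right. exists u. split; auto.
      assert (E : d2 u nta = n2 u + 2 * sg + A) by (unfold d2, nta, sg, A, n2; simpl; ring).
      rewrite E, Hnu.
      assert (- sg <= A) by nra.
      assert ((A + sg) * A <= Q^2) by nra.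
      assert ((A + sg) * A < r / 2 * A) by lra.
      assert (A + sg < r / 2) by (apply Rmult_lt_reg_r with A; auto). lra. }
  assert (Hw : exists w, Kst Om w /\ P w a = 0 /\ w <> (0,0)).
  { assert (Pta : P ta a = 0) by (unfold P, ta; simpl; ring).
    assert (Pnta : P nta a = 0) by (unfold P, nta; simpl; ring).
    destruct (classic (Kst Om ta)) as [K|K].
    - exists ta. split; auto. split; auto. intros E. unfold ta in E. injection E as E1 E2.
      unfold A, n2 in Hna. rewrite E1, E2 in Hna. lra.
    - destruct (not_closure_ball (Kst Om) (Kst_closed Om) ta K) as [e [He Hb]].
      exists nta. split; [|split; auto].
      + apply Kst_closed. apply closure_iff. intros r Hr.
        destruct (Hdich (Rmin r e) (Rmin_pos _ _ Hr He)) as [[u [Ku Hu]]|[u [Ku Hu]]].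
        * exfalso. specialize (Hb u Ku). rewrite d2_sym in Hb. pose proof (Rmin_r r e). lra.
        * exists u. split; auto. rewrite d2_sym. pose proof (Rmin_l r e). lra.
      + intros E. unfold nta in E. injection E as E1 E2.
        unfold A, n2 in Hna. assert (snd a = 0) by lra. assert (fst a = 0) by lra.
        rewrite H, H1 in Hna. lra. }
  destruct Hw as [w [Kw [Pw Nw]]].
  assert (Bw : boundary (Kst Om) w).
  { split; [apply in_closure; auto|].
    apply (X_not_interior (Kst Om) w a); [intros y Hy; apply Hy; auto | auto | apply (prop_i_nz Om a Hi Ha)]. }
  assert (Contra : forall d, ray d w -> dist_zero (ray d) (antipolar Om) -> False).
  { intros d [t [Ht Ew]] Dz.
    assert (Pda : P d a = 0).
    { assert (t * P d a = 0) by (rewrite <- Pw, Ew; unfold P, scal; simpl; ring).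
      destruct (Rmult_integral _ _ H); auto. subst t. exfalso. apply Nw. rewrite Ew. unfold scal; f_equal; ring. }
    assert (He : 0 < sqrt (/ (A + 1))) by (apply sqrt_lt_R0; apply Rinv_0_lt_compat; unfold A; lra).
    destruct (Dz _ He) as [x [psi [[tau [Htau Ex]] [Hpsi Hd]]]].
    apply edist_lt in Hd; auto. rewrite pow2_sqrt in Hd by (left; apply Rinv_0_lt_compat; unfold A; lra).
    assert (Pxa : P x a = 0) by (rewrite Ex; unfold P, scal in *; simpl; nra).
    specialize (Hpsi a Ha). change (P psi a >= 1) in Hpsi.
    pose proof (P_diff_bound psi x a) as Hdb. rewrite Pxa in Hdb. rewrite d2_sym in Hd.
    assert (d2 psi x * n2 a <= / (A + 1) * A) by (apply Rmult_le_compat_r; [apply n2_ge0|lra]).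
    assert (/ (A + 1) * A < 1).
    { apply Rmult_lt_reg_l with (A + 1); [unfold A; lra|]. rewrite <- Rmult_assoc, Rinv_r by (unfold A; lra). lra. }
    unfold A in *. assert (1 <= (P psi a - 0)^2) by nra. lra. }
  destruct (proj1 (Hbd w) Bw) as [R|R]; [apply (Contra d0)|apply (Contra d1)]; auto.
Qed.

Lemma part1 Om : prop_i Om -> (prop_star Om <-> prop_starstar (antipolar Om)).
Proof.
  intros Hi. split; [|apply backward; auto].
  intros Hs. unfold prop_starstar. rewrite (F4 Om Hi).
  destruct (structure (Kst Om) (Kst_closed Om) (Kst_convex Om) (Kst_cone Om) (Kst_nz Om Hi) (Kst_nf Om Hi))
    as [d0 [d1 [N0 [N1 Hb]]]].
  exists d0, d1. split; auto. split; auto. split; auto. split.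
  - apply dz; auto. apply Hb. left. exists 1. split; [lra|]. unfold scal; destruct d0; simpl; f_equal; ring.
  - apply dz; auto. apply Hb. right. exists 1. split; [lra|]. unfold scal; destruct d1; simpl; f_equal; ring.
Qed.

Theorem theorem4 (Om : pset) :
  prop_i Om ->
  (prop_star Om <-> prop_starstar (antipolar Om)) /\
  (prop_star (antipolar Om) <-> prop_starstar Om).
Proof.
  intros Hi. split; [apply part1; auto|].
  pose proof (part1 (antipolar Om) (prop_i_dual Om Hi)) as H.
  rewrite (bipolar Om Hi) in H. exact H.
Qed.
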